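(* Let $N\ge1$, constants $\kappa,\epsilon,\sigma_B,\sigma_E,G,\Upsilon>0$, and $p_{1,B}\ge p_{2,B}\ge\dots\ge p_{N,B}>0$ (sorted in descending order). Consider the binary program $$\max_{\boldsymbol a\in\{0,1\}^N}\ \sum_{n=1}^N a_np_{n,B}\quad\text{s.t.}\quad \frac{2\kappa a_np_{n,B}}{\sqrt{\sigma_B}}\le\epsilon\ \ \forall n,\qquad \frac{G\sqrt{\sigma_E}}{\big(\sum_{n=1}^N a_n\big)\max_n\{a_np_{n,B}\}}\ge\sqrt{\Upsilon}.$$ Assume $p_{i,B}$ is the largest entry of $(p_{1,B},\dots,p_{N,B})$ satisfying $\frac{2\kappa p_{i,B}}{\sqrt{\sigma_B}}\le\epsilon$. For $1\le x\le N-i+1$ let $K_x=\min\big\{N-i-x+2,\ \big\lfloor\frac{G\sqrt{\sigma_E}}{p_{i+x-1,B}\sqrt{\Upsilon}}\big\rfloor\big\}$ and define $\boldsymbol a^x\in\{0,1\}^N$ by $[\boldsymbol a^x]_n=1$ if $i+x-1\le n\le i+x+K_x-2$ and $[\boldsymbol a^x]_n=0$ otherwise. Then the only candidates for a globally optimal solution of the program are the $N-i+1$ vectors $\boldsymbol a^1,\dots,\boldsymbol a^{N-i+1}$.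
   Context: This program arises in the paper as the high-model-dimension ($d\to\infty$) limit of a device-selection problem: $a_n=1$ means device $n$ uploads its gradient, $a_n=0$ means it acts as a jammer; $p_{n,B}$ is channel gain times square root of power budget, $\kappa=\sqrt{2\ln(1.25/\zeta)}$ is a privacy constant, $\epsilon$ a differential-privacy level, $\Upsilon$ a security requirement, $\sigma_B,\sigma_E$ noise variances at the server and eavesdropper, and $G$ a gradient-norm bound. *)

(* Defs.v *)
From HB Require Import structures.
From mathcomp Require Import all_boot all_order all_algebra.
From mathcomp Require Import all_reals.
Set Implicit Arguments. Unset Strict Implicit. Unset Printing Implicit Defensive.
Import Order.TTheory GRing.Theory Num.Theory.
Local Open Scope ring_scope.

Section Prog.
Variables (R : realType) (N : nat).
(* p n is p_{n,B} for 1 <= n <= N; a vector a in {0,1}^N is a : 'I_N -> bool,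
   a j is the entry a_{j+1}. *)
Variables (kappa eps sB sE G Ups : R) (p : nat -> R).

Definition ent (a : 'I_N -> bool) (j : 'I_N) : R := (a j)%:R * p j.+1.

Definition objective (a : 'I_N -> bool) : R := \sum_(j < N) ent a j.

Definition maxap (a : 'I_N -> bool) : R := \big[Num.max/0]_(j < N) ent a j.

Definition nsel (a : 'I_N -> bool) : R := (\sum_(j < N) (a j : nat))%:R.

(* Feasibility. The security constraint G sqrt(sE) / (sum a * max a p) >= sqrt Ups
   is read with the convention that a zero denominator gives +oo (constraint holds). *)
Definition feasible (a : 'I_N -> bool) : Prop :=
  (forall j : 'I_N, 2 * kappa * ent a j / Num.sqrt sB <= eps) /\
  (nsel a * maxap a = 0 \/
   Num.sqrt Ups <= G * Num.sqrt sE / (nsel a * maxap a)).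

Definition optimal (a : 'I_N -> bool) : Prop :=
  feasible a /\ forall b, feasible b -> objective b <= objective a.

Definition Kx (i x : nat) : nat :=
  minn (N + 2 - (i + x))
       `|Num.floor (G * Num.sqrt sE / (p (i + x - 1)%N * Num.sqrt Ups))|%N.

Definition cand (i x : nat) : 'I_N -> bool :=
  fun j => (i + x - 1 <= j.+1)%N && (j.+1 <= i + x + Kx i x - 2)%N.
End Prog.

(* Main.v *)
Require Import Defs.
From HB Require Import structures.
From mathcomp Require Import all_boot all_order all_algebra.
From mathcomp Require Import all_reals.
From mathcomp Require Import ring lra zify.
Import Order.TTheory GRing.Theory Num.Theory.
Local Open Scope ring_scope.

Lemma pmono (R : realType) (N : nat) (p : nat -> R) :
  (forall n, (1 <= n < N)%N -> p n.+1 <= p n) ->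
  forall m n, (1 <= m)%N -> (m <= n)%N -> (n <= N)%N -> p n <= p m.
Proof.
move=> H m n hm; elim: n => [|n IH] hmn hn; first lia.
case: (ltngtP m n.+1) => h; last by rewrite h.
- apply: le_trans (H n _) (IH _ _); lia.
- lia.
Qed.

Lemma count_ind (N f K : nat) : (1 <= f)%N -> (f + K <= N + 1)%N ->
  (\sum_(j < N) ((f <= j.+1) && (j.+1 <= f + K - 1)) : nat)%N = K.
Proof.
move=> h1 h2.
rewrite -(big_mkord xpredT (fun j => nat_of_bool ((f <= j.+1) && (j.+1 <= f + K - 1))%N)).
rewrite (@big_cat_nat _ _ _ f.-1) /=; [|lia|lia].
rewrite (@big_cat_nat _ _ _ (f.-1 + K) f.-1) /=; [|lia|lia].
rewrite big_nat_cond big1; last by move=> j /andP[/andP[_ hj] _]; case: andP => // -[]; lia.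
rewrite [X in (_ + (_ + X))%N]big_nat_cond [X in (_ + (_ + X))%N]big1; last by move=> j /andP[/andP[hj _] _]; case: andP => // -[]; lia.
rewrite (@eq_big_nat _ _ _ _ _ _ (fun _ => 1%N)); last by move=> j /andP[hj hj']; case: andP => // -[]; split; lia.
rewrite sum_nat_const_nat; lia.
Qed.

Lemma cand_feas (R : realType) (N : nat) (kappa eps sB sE G Ups : R)
    (p : nat -> R) (i f : nat) (b : 'I_N -> bool) :
  0 < kappa -> 0 < eps -> 0 < sB -> 0 < sE -> 0 < G -> 0 < Ups ->
  (forall n, (1 <= n < N)%N -> p n.+1 <= p n) ->
  (forall n, (1 <= n <= N)%N -> 0 < p n) ->
  (1 <= i)%N -> (i <= f <= N)%N ->
  2 * kappa * p i / Num.sqrt sB <= eps ->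
  (forall j : 'I_N, b j = ((f <= j.+1) && (j.+1 <= f + minn (N + 1 - f)
      `|Num.floor (G * Num.sqrt sE / (p f * Num.sqrt Ups))|%N - 1))%N) ->
  @feasible R N kappa eps sB sE G Ups p b.
Proof.
move=> hk he hsB hsE hG hU hmono hpos hi /andP[hif hfN] hpi hb.
have hpf : 0 < p f by apply: hpos; lia.
have hsU : 0 < Num.sqrt Ups by rewrite sqrtr_gt0.
have hsE' : 0 < Num.sqrt sE by rewrite sqrtr_gt0.
set D := G * _ / _ in hb.
have hD : 0 < D by rewrite /D; apply: divr_gt0; apply: mulr_gt0.
have hDe : G * Num.sqrt sE = Num.sqrt Ups * (D * p f).
  by rewrite /D; field; apply/andP; split; apply/lt0r_neq0.
clearbody D.
move: hb; rewrite (_ : `|Num.floor D|%N = Num.truncn D); last by rewrite truncn_floor (ltW hD).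
set K := minn _ _ => hb.
have hKD : K%:R <= D.
  apply: le_trans (_ : (Num.truncn D)%:R <= D); last by rewrite truncn_le ltW.
  by rewrite ler_nat geq_minr.
have hKN : (K <= N + 1 - f)%N by rewrite geq_minl.
clearbody K.
split.
- move=> j; rewrite /ent hb; case: andP => [[h1 h2]|_] /=.
  + rewrite mul1r; apply: le_trans hpi.
    rewrite ler_wpM2r ?invr_ge0 ?sqrtr_ge0 //; apply: ler_wpM2l; first lra.
    apply: (@pmono _ _ _ hmono); move: (ltn_ord j) => hj; clear -hj h1 h2 hif hi hfN; lia.
  + by rewrite !mul0r mulr0 mul0r ltW.
- rewrite /nsel.
  under eq_bigr => j _ do rewrite hb.
  rewrite count_ind; [|exact: leq_trans hi hif|clear -hKN hfN; lia].
  set M := maxap _ _.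
  have hM0 : 0 <= M.
    rewrite /M /maxap; apply: (big_ind (fun x => 0 <= x)) => //.
      by move=> x y hx hy; rewrite le_max hx.
    by move=> j _; rewrite /ent mulr_ge0 // ltW // hpos //= ltn_ord.
  have hMp : M <= p f.
    rewrite /M /maxap; apply: bigmax_le; first exact: ltW.
    move=> j _; rewrite /ent hb; case: andP => [[h1 h2]|_] /=.
      by rewrite mul1r; apply: (@pmono _ _ _ hmono); move: (ltn_ord j) => hj; clear -hj h1 h2 hif hi hfN; lia.
    by rewrite mul0r ltW.
  case: (eqVneq (K%:R * M) 0) => hz; [by left | right].
  rewrite ler_pdivlMr; last by rewrite lt_def hz mulr_ge0.
  rewrite hDe.
  apply: ler_wpM2l; first exact: ltW.
  by apply: ler_pM; rewrite ?ler0n.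
Qed.

Lemma obj_le (R : realType) (N : nat) (p : nat -> R) (f K : nat)
    (a b : 'I_N -> bool) :
  (forall n, (1 <= n < N)%N -> p n.+1 <= p n) ->
  (forall n, (1 <= n <= N)%N -> 0 < p n) ->
  (1 <= f)%N -> (1 <= K)%N -> (f + K <= N + 1)%N ->
  (forall j : 'I_N, b j = ((f <= j.+1) && (j.+1 <= f + K - 1))%N) ->
  (forall j : 'I_N, a j -> (f <= j.+1)%N) ->
  (\sum_(j < N) (a j : nat) <= K)%N ->
  @objective R N p a <= @objective R N p b.
Proof.
move=> hmono hpos hf hK hfK hb ha hS.
have hpt : 0 < p (f + K - 1)%N by apply: hpos; clear -hf hK hfK; lia.
have pw : forall j : 'I_N,
    ent p a j - ent p b j <= ((a j)%:R - (b j)%:R) * p (f + K - 1)%N.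
  move=> j; rewrite /ent hb; move: (ltn_ord j) (ha j) => hj.
  case: (a j) => [/(_ isT) haj|_]; case: andP => [[h1 h2]|hn] /=.
  - lra.
  - have ht : (f + K - 1 < j.+1)%N.
      by case: (leqP j.+1 (f + K - 1)) => // h; exfalso; apply: hn; split.
    have : p j.+1 <= p (f + K - 1)%N.
      by apply: (@pmono _ _ _ hmono); clear -ht hj hf hK hfK; lia.
    lra.
  - have : p (f + K - 1)%N <= p j.+1.
      by apply: (@pmono _ _ _ hmono); clear -h1 h2 hj hf hK hfK; lia.
    lra.
  - lra.
rewrite -subr_le0 /objective -sumrB.
apply: le_trans (ler_sum _ (fun j _ => pw j)) _.
rewrite -mulr_suml sumrB -!natr_sum.
under [X in (_ - X%:R) * _]eq_bigr => j _ do rewrite hb.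
rewrite count_ind //.
rewrite pmulr_lle0 // subr_le0 ler_nat //.
Qed.

Lemma a_bound (R : realType) (N : nat) (kappa eps sB sE G Ups : R)
    (p : nat -> R) (a : 'I_N -> bool) (j0 : 'I_N) :
  0 < sE -> 0 < G -> 0 < Ups ->
  (forall n, (1 <= n <= N)%N -> 0 < p n) ->
  @feasible R N kappa eps sB sE G Ups p a -> a j0 ->
  (forall j : 'I_N, a j -> (j0 <= j)%N) ->
  (\sum_(j < N) (a j : nat) <= minn (N + 1 - j0.+1)
     `|Num.floor (G * Num.sqrt sE / (p j0.+1 * Num.sqrt Ups))|%N)%N.
Proof.
move=> hsE hG hU hpos hfe haj0 hmin.
have hpf : 0 < p j0.+1 by apply: hpos; rewrite /= ltn_ord.
have hsU : 0 < Num.sqrt Ups by rewrite sqrtr_gt0.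
have hsE' : 0 < Num.sqrt sE by rewrite sqrtr_gt0.
have hD : 0 < G * Num.sqrt sE / (p j0.+1 * Num.sqrt Ups).
  by apply: divr_gt0; apply: mulr_gt0.
rewrite leq_min; apply/andP; split.
  apply: leq_trans (_ : \sum_(j < N) nat_of_bool ((j0.+1 <= j.+1) &&
       (j.+1 <= j0.+1 + (N + 1 - j0.+1) - 1))%N <= _)%N.
    apply: leq_sum => j _; case haj: (a j) => //=.
    have h := hmin j haj; have hj := ltn_ord j.
    rewrite (_ : (_ && _) = true) //; apply/andP; split; clear -h hj; lia.
  rewrite count_ind //; have := ltn_ord j0; clear; lia.
set D := G * _ / _ in hD *.
rewrite (_ : `|Num.floor D|%N = Num.truncn D); last by rewrite truncn_floor (ltW hD).
rewrite truncn_ge_nat ?(ltW hD) //.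
rewrite /D.
set S := (\sum_(j < N) _)%N.
have hS1 : (1 <= S)%N by rewrite /S (bigD1 j0) //= haj0.
have hM : p j0.+1 <= maxap p a.
  have := le_bigmax 0 (ent p a) j0; rewrite /ent haj0 /= mul1r; exact.
move: hfe => [_ [hz|hle]].
  exfalso; move: hz; apply/eqP; rewrite mulf_neq0 //.
    by rewrite /nsel -/S pnatr_eq0 -lt0n.
  by apply/lt0r_neq0; apply: lt_le_trans hM.
have hSM : 0 < nsel R a * maxap p a.
  by apply: mulr_gt0; [rewrite /nsel -/S ltr0n | apply: lt_le_trans hM].
rewrite ler_pdivlMr in hle => //.
rewrite ler_pdivlMr; last exact: mulr_gt0.
apply: le_trans hle.
rewrite /nsel -/S.
rewrite [X in X <= _](_ : _ = Num.sqrt Ups * (S%:R * p j0.+1)); last by ring.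
apply: ler_wpM2l; first exact: ltW.
apply: ler_wpM2l => //; exact: ler0n.
Qed.

Theorem lemma6 (R : realType) (N : nat) (kappa eps sB sE G Ups : R)
    (p : nat -> R) (i : nat) :
  (1 <= N)%N ->
  0 < kappa -> 0 < eps -> 0 < sB -> 0 < sE -> 0 < G -> 0 < Ups ->
  (forall n, (1 <= n < N)%N -> p n.+1 <= p n) ->
  (forall n, (1 <= n <= N)%N -> 0 < p n) ->
  (1 <= i <= N)%N ->
  2 * kappa * p i / Num.sqrt sB <= eps ->
  (forall n, (1 <= n < i)%N -> eps < 2 * kappa * p n / Num.sqrt sB) ->
  forall a : 'I_N -> bool,
    @optimal R N kappa eps sB sE G Ups p a ->
    exists x : nat, (1 <= x <= N - i + 1)%N /\
      @optimal R N kappa eps sB sE G Ups p (@cand R N sE G Ups p i x) /\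
      @objective R N p (@cand R N sE G Ups p i x) = @objective R N p a.
Proof.
move=> hN hk he hsB hsE hG hU hmono hpos /andP[hi hiN] hpi hpn a [hfa hopt].
have priv : forall j : 'I_N, a j -> (i <= j.+1)%N.
  move=> j haj; case: (leqP i j.+1) => // hlt; exfalso.
  have := hfa.1 j; rewrite /ent haj /= mul1r => h.
  have := hpn j.+1 (hlt : (1 <= j.+1 < i)%N).
  lra.
have fin : forall f, (i <= f <= N)%N ->
    (forall b : 'I_N -> bool, (forall j : 'I_N, b j = ((f <= j.+1) &&
      (j.+1 <= f + minn (N + 1 - f)
      `|Num.floor (G * Num.sqrt sE / (p f * Num.sqrt Ups))|%N - 1))%N) ->
      objective p a <= objective p b) ->
    exists x : nat, (1 <= x <= N - i + 1)%N /\
      @optimal R N kappa eps sB sE G Ups p (@cand R N sE G Ups p i x) /\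
      @objective R N p (@cand R N sE G Ups p i x) = @objective R N p a.
  move=> f /andP[hif hfN] hobj; exists (f.+1 - i)%N; split.
    by apply/andP; split; clear -hif hfN; lia.
  have hb : forall j : 'I_N, @cand R N sE G Ups p i (f.+1 - i)%N j = ((f <= j.+1) &&
      (j.+1 <= f + minn (N + 1 - f)
      `|Num.floor (G * Num.sqrt sE / (p f * Num.sqrt Ups))|%N - 1))%N.
    move=> j; rewrite /cand /Kx.
    have -> : (i + (f.+1 - i) = f.+1)%N by clear -hif; lia.
    rewrite subn1 /=.
    have -> : (N + 2 - f.+1 = N + 1 - f)%N by clear -hfN; lia.
    set m := minn _ _.
    have -> : (f.+1 + m - 2 = f + m - 1)%N by clear; lia.
    by [].
  have hfeas := @cand_feas R N kappa eps sB sE G Ups p i f _ hk he hsB hsE hG hU hmono hpos hi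
      (introT andP (conj hif hfN)) hpi hb.
  have hle := hobj _ hb.
  have hge := hopt _ hfeas.
  split; last by apply: le_anti; rewrite hge hle.
  split => // c hc; exact: le_trans (hopt c hc) hle.
case: (pickP a) => [j0 hj0 | hnone].
  case: (arg_minnP (fun j : 'I_N => (j : nat)) hj0) => m hm hmin.
  have hmi := priv m hm.
  apply: (fin m.+1); first by apply/andP; split => //; exact: ltn_ord.
  move=> b hb.
  have hS := @a_bound R N kappa eps sB sE G Ups p a m hsE hG hU hpos hfa hm hmin.
  have hS1 : (1 <= \sum_(j < N) (a j : nat))%N by rewrite (bigD1 m) //= hm.
  have hKN := geq_minl (N + 1 - m.+1)
      `|Num.floor (G * Num.sqrt sE / (p m.+1 * Num.sqrt Ups))|%N.
  move: hS hKN hb; set K := minn _ _ => hS hKN hb.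
  have hm' := ltn_ord m.
  clearbody K.
  apply: (@obj_le R N p m.+1 K a b hmono hpos) => //.
  - by apply: leq_trans hS1 hS.
  - by clear -hKN hm'; lia.
apply: (fin i); first by apply/andP; split.
move=> b hb.
rewrite {1}/objective big1 => [|j _]; last by rewrite /ent hnone mul0r.
apply: sumr_ge0 => j _; rewrite /ent mulr_ge0 // ltW // hpos //= ltn_ord.
Qed.
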